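(* Assume the setting below (in particular Assumption 1), with $\nu\in(0,1)$, $\mu>0$, $\beta>0$, and let $\theta^*$ be any minimizer over $\Theta$ of $\theta\mapsto\tilde{\mathsf R}(\theta)+\mu V(\theta)+\frac{\beta}{n}K(\theta)$. Then for every $\theta\in\Theta$, $$\tilde{\mathsf R}(\theta)-\tilde{\mathsf R}(\theta^* )\ge\mu\big(V(\theta^* )-V(\theta)\big)+\frac{\beta}{n}\big(K(\theta^* )-K(\theta)\big)+\Big(\frac{(1-\nu)C_\ell}{2}-\mu\Big)\|f_\theta-f_{\theta^*}\|_2^2 .$$
   Context: Setting: $(X,Y)$ random pair in $\mathcal X\times\mathbb R$ with $|Y|\le b$ a.s. ($b>0$); $f_1,\dots,f_M$ deterministic measurable functions with $\max_j|f_j(X)|\le b$ a.s.; $\Theta=\{\theta\in\mathbb R^M:\theta_j\ge0,\ \sum_j\theta_j=1\}$, $f_\theta=\sum_j\theta_jf_j$, $e_1,\dots,e_M$ the canonical basis of $\mathbb R^M$; $\|f\|_2=\sqrt{\mathbb E f(X)^2}$; prior $\pi$ with $\pi_j>0$, $\sum_j\pi_j=1$; $n\ge1$ an integer. Assumption 1: for all $f,g\in[-b,b]$, $|\ell(Y,f)-\ell(Y,g)|\le C_b|f-g|$ a.s.; and a.s. $\ell(Y,\cdot)$ is strongly convex on $[-b,b]$ with modulus $C_\ell>0$, i.e. $\ell(Y,\alpha a+(1-\alpha)a')\le\alpha\ell(Y,a)+(1-\alpha)\ell(Y,a')-\frac{C_\ell}2\alpha(1-\alpha)(a-a')^2$ for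 $a,a'\in[-b,b]$, $\alpha\in(0,1)$. Notation: $\ell_\theta(y,x)=\ell(y,f_\theta(x))$, $\mathsf R(\theta)=\mathbb E\,\ell(Y,f_\theta(X))$; $\tilde\ell_\theta=(1-\nu)\ell_\theta+\nu\sum_j\theta_j\ell_{e_j}$ and $\tilde{\mathsf R}(\theta)=\mathbb E\,\tilde\ell_\theta(Y,X)=(1-\nu)\mathsf R(\theta)+\nu\sum_j\theta_j\mathsf R(e_j)$; $K(\theta)=\sum_j\theta_j\log(1/\pi_j)$; $V(\theta)=\sum_j\theta_j\|f_j-f_\theta\|_2^2$. *)

(* Defs.v *)
From Stdlib Require Import Reals Lra.
Open Scope R_scope.

(* Every genuine probability space (Omega, F, P) is an instance:
   integrable f := f is F-measurable and P-integrable, E := integral w.r.t. P,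
   null N := N is contained in a P-null measurable set. *)
Record ProbSpace := {
  Omega : Type;
  integrable : (Omega -> R) -> Prop;
  E : (Omega -> R) -> R;
  null : (Omega -> Prop) -> Prop;
  integrable_const : forall c : R, integrable (fun _ => c);
  integrable_plus : forall f g, integrable f -> integrable g ->
                      integrable (fun w => f w + g w);
  integrable_scal : forall (c : R) f, integrable f -> integrable (fun w => c * f w);
  E_const : forall c : R, E (fun _ => c) = c;
  E_plus : forall f g, integrable f -> integrable g ->
             E (fun w => f w + g w) = E f + E g;
  E_scal : forall (c : R) f, integrable f -> E (fun w => c * f w) = c * E f;
  null_empty : null (fun _ => False);
  null_sub : forall N N' : Omega -> Prop, (forall w, N w -> N' w) -> null N' -> null N;
  null_union : forall N N', null N -> null N' -> null (fun w => N w \/ N' w);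
  E_mono : forall f g, integrable f -> integrable g ->
             (exists N, null N /\ forall w, ~ N w -> f w <= g w) -> E f <= E g
}.

Definition almost_surely (ps : ProbSpace) (P : Omega ps -> Prop) : Prop :=
  exists N, null ps N /\ forall w, ~ N w -> P w.

Fixpoint sumM (M : nat) (g : nat -> R) : R :=
  match M with
  | O => 0
  | S m => sumM m g + g m
  end.

Definition in_simplex (M : nat) (theta : nat -> R) : Prop :=
  (forall j, (j < M)%nat -> 0 <= theta j) /\ sumM M theta = 1.

Definition e_vec (j : nat) : nat -> R := fun k => if Nat.eqb k j then 1 else 0.

Definition f_theta {Xs : Type} (M : nat) (f : nat -> Xs -> R) (theta : nat -> R)
  : Xs -> R := fun x => sumM M (fun j => theta j * f j x).

Definition sqnorm2 (ps : ProbSpace) {Xs : Type} (X : Omega ps -> Xs) (g : Xs -> R) : R :=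
  E ps (fun w => (g (X w)) ^ 2).

Definition risk (ps : ProbSpace) {Xs : Type} (X : Omega ps -> Xs) (Y : Omega ps -> R)
  (l : R -> R -> R) (M : nat) (f : nat -> Xs -> R) (theta : nat -> R) : R :=
  E ps (fun w => l (Y w) (f_theta M f theta (X w))).

Definition risk_tilde (ps : ProbSpace) {Xs : Type} (X : Omega ps -> Xs) (Y : Omega ps -> R)
  (l : R -> R -> R) (M : nat) (f : nat -> Xs -> R) (nu : R) (theta : nat -> R) : R :=
  (1 - nu) * risk ps X Y l M f theta
  + nu * sumM M (fun j => theta j * risk ps X Y l M f (e_vec j)).

Definition Kdiv (M : nat) (pi : nat -> R) (theta : nat -> R) : R :=
  sumM M (fun j => theta j * ln (1 / pi j)).

Definition Vvar (ps : ProbSpace) {Xs : Type} (X : Omega ps -> Xs)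
  (M : nat) (f : nat -> Xs -> R) (theta : nat -> R) : R :=
  sumM M (fun j => theta j * sqnorm2 ps X (fun x => f j x - f_theta M f theta x)).

Definition objective (ps : ProbSpace) {Xs : Type} (X : Omega ps -> Xs) (Y : Omega ps -> R)
  (l : R -> R -> R) (M : nat) (f : nat -> Xs -> R) (pi : nat -> R)
  (nu mu beta : R) (n : nat) (theta : nat -> R) : R :=
  risk_tilde ps X Y l M f nu theta + mu * Vvar ps X M f theta
  + beta / INR n * Kdiv M pi theta.

(* Main.v *)
Require Import Defs.
From Stdlib Require Import Reals Lra Lia FunctionalExtensionality.
Open Scope R_scope.

Lemma sumM_plus m g h : sumM m (fun j => g j + h j) = sumM m g + sumM m h.
Proof. induction m; simpl; [ring| rewrite IHm; ring]. Qed.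

Lemma sumM_scal m c g : sumM m (fun j => c * g j) = c * sumM m g.
Proof. induction m; simpl; [ring| rewrite IHm; ring]. Qed.

Lemma sumM_ext m g h : (forall j, (j < m)%nat -> g j = h j) -> sumM m g = sumM m h.
Proof. induction m; intros H; simpl; auto. rewrite IHm by (intros; apply H; lia). rewrite (H m) by lia. auto. Qed.

Lemma lin_sum m a b u v g :
  sumM m (fun j => (a * u j + b * v j) * g j)
  = a * sumM m (fun j => u j * g j) + b * sumM m (fun j => v j * g j).
Proof. induction m; simpl; [ring| rewrite IHm; ring]. Qed.

Lemma integrable_sum ps m (g : nat -> Omega ps -> R) :
  (forall j, (j < m)%nat -> integrable ps (g j)) ->
  integrable ps (fun w => sumM m (fun j => g j w)).
Proof.
  induction m; intros H; simpl.
  - exact (integrable_const ps 0).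
  - apply integrable_plus; [apply IHm; intros; apply H; lia | apply H; lia].
Qed.

Lemma E_sum ps m (g : nat -> Omega ps -> R) :
  (forall j, (j < m)%nat -> integrable ps (g j)) ->
  E ps (fun w => sumM m (fun j => g j w)) = sumM m (fun j => E ps (g j)).
Proof.
  induction m; intros H; simpl.
  - exact (E_const ps 0).
  - rewrite (E_plus ps (fun w => sumM m (fun j => g j w)) (g m)).
    + rewrite IHm; [reflexivity|]. intros; apply H; lia.
    + apply integrable_sum; intros; apply H; lia.
    + apply H; lia.
Qed.

Lemma f_comb {Xs} M (f : nat -> Xs -> R) a th ts x :
  f_theta M f (fun j => a * th j + (1 - a) * ts j) x
  = a * f_theta M f th x + (1 - a) * f_theta M f ts x.
Proof.
  unfold f_theta. rewrite <- !sumM_scal, <- sumM_plus.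
  apply sumM_ext; intros; ring.
Qed.

Lemma int_QF ps Xs (X : Omega ps -> Xs) M f
  (hint_f : forall j k, (j < M)%nat -> (k < M)%nat ->
              integrable ps (fun w => f j (X w) * f k (X w))) j c :
  (j < M)%nat -> integrable ps (fun w => f j (X w) * f_theta M f c (X w)).
Proof.
  intros Hj.
  replace (fun w => f j (X w) * f_theta M f c (X w))
    with (fun w => sumM M (fun k => c k * (f j (X w) * f k (X w)))).
  - apply integrable_sum; intros; apply integrable_scal; apply hint_f; auto.
  - apply functional_extensionality; intro w. unfold f_theta.
    rewrite <- sumM_scal. apply sumM_ext; intros; ring.
Qed.

Lemma int_FF ps Xs (X : Omega ps -> Xs) M f
  (hint_f : forall j k, (j < M)%nat -> (k < M)%nat ->
              integrable ps (fun w => f j (X w) * f k (X w))) a c :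
  integrable ps (fun w => f_theta M f a (X w) * f_theta M f c (X w)).
Proof.
  replace (fun w => f_theta M f a (X w) * f_theta M f c (X w))
    with (fun w => sumM M (fun j => a j * (f j (X w) * f_theta M f c (X w)))).
  - apply integrable_sum; intros; apply integrable_scal; apply int_QF; auto.
  - apply functional_extensionality; intro w. unfold f_theta at 2.
    rewrite (Rmult_comm (sumM _ _)), <- sumM_scal. apply sumM_ext; intros; ring.
Qed.

Lemma int_sq ps Xs (X : Omega ps -> Xs) M f
  (hint_f : forall j k, (j < M)%nat -> (k < M)%nat ->
              integrable ps (fun w => f j (X w) * f k (X w))) a c :
  integrable ps (fun w => (f_theta M f a (X w) - f_theta M f c (X w)) ^ 2).
Proof.
  replace (fun w => (f_theta M f a (X w) - f_theta M f c (X w)) ^ 2)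
    with (fun w => (f_theta M f a (X w) * f_theta M f a (X w)
                    + (-2) * (f_theta M f a (X w) * f_theta M f c (X w)))
                   + f_theta M f c (X w) * f_theta M f c (X w)).
  - repeat apply integrable_plus; try apply integrable_scal; apply int_FF; auto.
  - apply functional_extensionality; intro w; ring.
Qed.

Lemma bound_gen {Xs} M (f : nat -> Xs -> R) th x b :
  (forall j, (j < M)%nat -> 0 <= th j) ->
  (forall j, (j < M)%nat -> Rabs (f j x) <= b) ->
  forall m, (m <= M)%nat ->
  - b * sumM m th <= sumM m (fun j => th j * f j x) <= b * sumM m th.
Proof.
  intros H0 Hb m. induction m; intros Hm; simpl.
  - lra.
  - assert (IH := IHm ltac:(lia)).
    assert (h0 := H0 m ltac:(lia)). assert (hb := Hb m ltac:(lia)).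
    unfold Rabs in hb; destruct (Rcase_abs (f m x)); nra.
Qed.

Lemma bound_F {Xs} M (f : nat -> Xs -> R) th x b :
  in_simplex M th ->
  (forall j, (j < M)%nat -> Rabs (f j x) <= b) ->
  - b <= f_theta M f th x <= b.
Proof.
  intros [H0 H1] Hb. pose proof (bound_gen M f th x b H0 Hb M (le_n _)) as H.
  rewrite H1 in H. unfold f_theta. lra.
Qed.

Lemma final_limit D x : (forall a, 0 < a < 1 -> D >= (1 - a) * x) -> D >= x.
Proof.
  intros H. destruct (Rle_dec x 0) as [Hx|Hx].
  - specialize (H (1/2) ltac:(lra)). lra.
  - apply Rnot_le_lt in Hx. destruct (Rle_dec x D) as [h|h]; [lra|].
    apply Rnot_le_lt in h. exfalso.
    destruct (Rle_dec D (- x)) as [h2|h2].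
    + specialize (H (1/2) ltac:(lra)). lra.
    + apply Rnot_le_lt in h2.
      assert (Ha : 0 < (x - D) / (2 * x) < 1).
      { split. apply Rdiv_lt_0_compat; lra.
        apply Rmult_lt_reg_r with (2 * x); [lra|].
        unfold Rdiv; rewrite Rmult_assoc, Rinv_l by lra. lra. }
      specialize (H _ Ha).
      assert ((1 - (x - D) / (2 * x)) * x = (x + D) / 2) by (field; lra).
      lra.
Qed.

Lemma V_formula ps Xs (X : Omega ps -> Xs) M f
  (hint_f : forall j k, (j < M)%nat -> (k < M)%nat ->
              integrable ps (fun w => f j (X w) * f k (X w))) th :
  sumM M th = 1 ->
  Vvar ps X M f th = sumM M (fun j => th j * E ps (fun w => f j (X w) * f j (X w)))
     - E ps (fun w => f_theta M f th (X w) * f_theta M f th (X w)).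
Proof.
  intros Hs. unfold Vvar, sqnorm2.
  assert (Hj : forall j, (j < M)%nat ->
    E ps (fun w => (fun x => f j x - f_theta M f th x) (X w) ^ 2)
    = E ps (fun w => f j (X w) * f j (X w))
      + (-2) * E ps (fun w => f j (X w) * f_theta M f th (X w))
      + E ps (fun w => f_theta M f th (X w) * f_theta M f th (X w))).
  { intros j Hj.
    replace (fun w => (fun x => f j x - f_theta M f th x) (X w) ^ 2)
      with (fun w => (f j (X w) * f j (X w) + (-2) * (f j (X w) * f_theta M f th (X w)))
                     + f_theta M f th (X w) * f_theta M f th (X w))
      by (apply functional_extensionality; intro; simpl; ring).
    rewrite E_plus, E_plus, E_scal; [reflexivity| | | | | ].
    - apply int_QF; auto.
    - apply hint_f; auto.
    - apply integrable_scal, int_QF; auto.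
    - apply integrable_plus; [apply hint_f; auto| apply integrable_scal, int_QF; auto].
    - apply int_FF; auto. }
  rewrite (sumM_ext _ _ (fun j => th j * E ps (fun w => f j (X w) * f j (X w))
      + (-2) * (th j * E ps (fun w => f j (X w) * f_theta M f th (X w)))
      + E ps (fun w => f_theta M f th (X w) * f_theta M f th (X w)) * th j))
    by (intros j hj; rewrite Hj by auto; ring).
  rewrite !sumM_plus, !sumM_scal, Hs.
  assert (HQF : sumM M (fun j => th j * E ps (fun w => f j (X w) * f_theta M f th (X w)))
           = E ps (fun w => f_theta M f th (X w) * f_theta M f th (X w))).
  { replace (fun w => f_theta M f th (X w) * f_theta M f th (X w))
      with (fun w => sumM M (fun j => (fun j w => th j * (f j (X w) * f_theta M f th (X w))) j w)).
    - rewrite E_sum.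
      + apply sumM_ext; intros; rewrite E_scal; auto. apply int_QF; auto.
      + intros; apply integrable_scal, int_QF; auto.
    - apply functional_extensionality; intro w. cbv beta.
      unfold f_theta.
      rewrite <- (sumM_scal M (sumM M (fun j0 => th j0 * f j0 (X w)))).
      apply sumM_ext; intros; ring. }
  rewrite HQF. ring.
Qed.

Theorem proposition3
  (ps : ProbSpace) (Xs : Type) (X : Omega ps -> Xs) (Y : Omega ps -> R)
  (b : R) (hb : 0 < b)
  (M : nat) (f : nat -> Xs -> R)
  (pi : nat -> R) (n : nat) (hn : (1 <= n)%nat)
  (l : R -> R -> R) (Cb Cl : R)
  (* |Y| <= b a.s. *)
  (hY : almost_surely ps (fun w => Rabs (Y w) <= b))
  (* max_j |f_j(X)| <= b a.s. *)
  (hf : almost_surely ps (fun w => forall j, (j < M)%nat -> Rabs (f j (X w)) <= b))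
  (* prior *)
  (hpi_pos : forall j, (j < M)%nat -> 0 < pi j)
  (hpi_sum : sumM M pi = 1)
  (* integrability (f_j measurable and bounded; R(theta) finite) *)
  (hint_f : forall j k, (j < M)%nat -> (k < M)%nat ->
              integrable ps (fun w => f j (X w) * f k (X w)))
  (hint_l : forall theta, in_simplex M theta ->
              integrable ps (fun w => l (Y w) (f_theta M f theta (X w))))
  (* Assumption 1 *)
  (hLip : forall u v, -b <= u <= b -> -b <= v <= b ->
            almost_surely ps (fun w => Rabs (l (Y w) u - l (Y w) v) <= Cb * Rabs (u - v)))
  (hCl : 0 < Cl)
  (hconv : almost_surely ps (fun w => forall a a' alpha,
             -b <= a <= b -> -b <= a' <= b -> 0 < alpha < 1 ->
             l (Y w) (alpha * a + (1 - alpha) * a')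
               <= alpha * l (Y w) a + (1 - alpha) * l (Y w) a'
                  - Cl / 2 * alpha * (1 - alpha) * (a - a') ^ 2))
  (nu mu beta : R) (hnu : 0 < nu < 1) (hmu : 0 < mu) (hbeta : 0 < beta)
  (theta_star : nat -> R) (hstar : in_simplex M theta_star)
  (hmin : forall theta, in_simplex M theta ->
            objective ps X Y l M f pi nu mu beta n theta_star
              <= objective ps X Y l M f pi nu mu beta n theta) :
  forall theta, in_simplex M theta ->
    risk_tilde ps X Y l M f nu theta - risk_tilde ps X Y l M f nu theta_star
    >= mu * (Vvar ps X M f theta_star - Vvar ps X M f theta)
       + beta / INR n * (Kdiv M pi theta_star - Kdiv M pi theta)
       + ((1 - nu) * Cl / 2 - mu)
         * sqnorm2 ps X (fun x => f_theta M f theta x - f_theta M f theta_star x).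
Proof.
  intros th Hth.
  set (D := sqnorm2 ps X (fun x => f_theta M f th x - f_theta M f theta_star x)).
  assert (Hmain : forall a, 0 < a < 1 ->
    objective ps X Y l M f pi nu mu beta n th - objective ps X Y l M f pi nu mu beta n theta_star
    >= (1 - a) * (((1 - nu) * Cl / 2 - mu) * D)).
  { intros a Ha.
    set (ta := fun j => a * th j + (1 - a) * theta_star j).
    pose proof Hth as [Hth0 Hth1]. pose proof hstar as [Hs0 Hs1].
    assert (Hta : in_simplex M ta).
    { split.
      - intros j hj; unfold ta. specialize (Hth0 j hj); specialize (Hs0 j hj); nra.
      - unfold ta. rewrite sumM_plus, !sumM_scal, Hth1, Hs1; ring. }
    pose proof Hta as [_ Hta1].
    assert (HF : forall x, f_theta M f ta x
                 = a * f_theta M f th x + (1 - a) * f_theta M f theta_star x)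
      by (intro; apply f_comb).
    pose proof (hint_l th Hth) as Il1.
    pose proof (hint_l theta_star hstar) as Il2.
    pose proof (int_sq ps Xs X M f hint_f th theta_star) as Isq.
    assert (Hrisk : risk ps X Y l M f ta <= a * risk ps X Y l M f th
               + (1 - a) * risk ps X Y l M f theta_star - Cl / 2 * a * (1 - a) * D).
    { assert (I1 : integrable ps (fun w => a * l (Y w) (f_theta M f th (X w))
                    + (1 - a) * l (Y w) (f_theta M f theta_star (X w))))
        by (apply integrable_plus; apply integrable_scal; auto).
      assert (I2 : integrable ps (fun w => (- (Cl / 2 * a * (1 - a)))
                     * (f_theta M f th (X w) - f_theta M f theta_star (X w)) ^ 2))
        by (apply integrable_scal; auto).
      assert (HE : E ps (fun w => (a * l (Y w) (f_theta M f th (X w))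
                    + (1 - a) * l (Y w) (f_theta M f theta_star (X w)))
                    + (- (Cl / 2 * a * (1 - a)))
                     * (f_theta M f th (X w) - f_theta M f theta_star (X w)) ^ 2)
                 = a * risk ps X Y l M f th
                   + (1 - a) * risk ps X Y l M f theta_star - Cl / 2 * a * (1 - a) * D).
      { rewrite E_plus by auto. rewrite E_plus by (apply integrable_scal; auto).
        rewrite E_scal by auto. rewrite E_scal by auto. rewrite E_scal by auto.
        unfold risk, D, sqnorm2. ring. }
      rewrite <- HE. unfold risk. apply E_mono.
      - apply hint_l; auto.
      - apply integrable_plus; auto.
      - destruct hf as [N1 [HN1 H1]]. destruct hconv as [N2 [HN2 H2]].
        exists (fun w => N1 w \/ N2 w). split; [apply null_union; auto|].
        intros w Hw.
        assert (n1 : ~ N1 w) by tauto. assert (n2 : ~ N2 w) by tauto.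
        rewrite HF.
        pose proof (bound_F M f th (X w) b Hth (H1 w n1)) as B1.
        pose proof (bound_F M f theta_star (X w) b hstar (H1 w n1)) as B2.
        specialize (H2 w n2 _ _ a B1 B2 Ha). lra. }
    assert (Hrt : risk_tilde ps X Y l M f nu ta
                  <= a * risk_tilde ps X Y l M f nu th
                     + (1 - a) * risk_tilde ps X Y l M f nu theta_star
                     - (1 - nu) * (Cl / 2 * a * (1 - a) * D)).
    { assert (Hsum : sumM M (fun j => ta j * risk ps X Y l M f (e_vec j))
        = a * sumM M (fun j => th j * risk ps X Y l M f (e_vec j))
          + (1 - a) * sumM M (fun j => theta_star j * risk ps X Y l M f (e_vec j)))
        by (unfold ta; exact (lin_sum _ _ _ _ _ _)).
      unfold risk_tilde. rewrite Hsum.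
      assert (0 < 1 - nu) by lra.
      apply (Rmult_le_compat_l (1 - nu)) in Hrisk; [|lra].
      lra. }
    assert (HV : Vvar ps X M f ta = a * Vvar ps X M f th + (1 - a) * Vvar ps X M f theta_star
                  + a * (1 - a) * D).
    { rewrite (V_formula ps Xs X M f hint_f ta Hta1),
              (V_formula ps Xs X M f hint_f th Hth1),
              (V_formula ps Xs X M f hint_f theta_star Hs1).
      replace (fun w => f_theta M f ta (X w) * f_theta M f ta (X w))
        with (fun w => (a * (f_theta M f th (X w) * f_theta M f th (X w))
                 + (1 - a) * (f_theta M f theta_star (X w) * f_theta M f theta_star (X w)))
                 + (- (a * (1 - a)))
                   * (f_theta M f th (X w) - f_theta M f theta_star (X w)) ^ 2)
        by (apply functional_extensionality; intro w; rewrite HF; ring).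
      rewrite E_plus by (try apply integrable_plus; apply integrable_scal; auto; apply int_FF; auto).
      rewrite E_plus by (apply integrable_scal; apply int_FF; auto).
      do 3 (rewrite E_scal by (first [apply int_FF; auto | auto])).
      assert (Hsum : sumM M (fun j => ta j * E ps (fun w => f j (X w) * f j (X w)))
        = a * sumM M (fun j => th j * E ps (fun w => f j (X w) * f j (X w)))
          + (1 - a) * sumM M (fun j => theta_star j * E ps (fun w => f j (X w) * f j (X w))))
        by (unfold ta; exact (lin_sum _ _ _ _ _ _)).
      rewrite Hsum. unfold D, sqnorm2. ring. }
    assert (HK : Kdiv M pi ta = a * Kdiv M pi th + (1 - a) * Kdiv M pi theta_star)
      by (unfold Kdiv, ta; exact (lin_sum _ _ _ _ _ _)).
    pose proof (hmin ta Hta) as Hm.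
    unfold objective in *. rewrite HV, HK in Hm.
    apply Rle_ge. apply (Rmult_le_reg_l a); [lra|].
    lra. }
  pose proof (final_limit _ _ Hmain) as Hf.
  unfold objective in Hf. lra.
Qed.
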